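(* For any $\lambda>0$ there exists an exponential set $\mathcal Y$ of positive words over the alphabet $\{a,b\}$ with the following properties: ( * ) If $V$ is a subword of some $W\in\mathcal Y$ and $|V|\ge\lambda|W|$, then $V$ occurs in $W$ as a subword only once; and if this $V$ is also a subword of some $U\in\mathcal Y$, then $U\equiv W$. ( ** ) Every word in $\mathcal Y$ is $7$-aperiodic.
   Context: $|W|$ is the length of a word $W$; $U\equiv V$ means letter-by-letter equality of words. A positive word over $\{a,b\}$ is a word in the letters $a,b$ (no inverse letters). A reduced word is $s$-aperiodic if it contains no subword of the form $Y^s$ with $Y$ a non-empty word. A set $\mathcal Y$ of words is exponential if there exist constants $C$ and $c>1$ such that $\#\{Y\in\mathcal Y:|Y|\le i\}\ge c^i$ for every $i\ge C$. *)

(* Defs.v *)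
From mathcomp Require Import all_boot.
From Stdlib Require Import Reals.
Set Implicit Arguments. Unset Strict Implicit. Unset Printing Implicit Defensive.

(* Alphabet {a,b}: a = true, b = false. A positive word is a seq bool. *)
Definition word := seq bool.

Definition subword (V W : word) : bool := infix V W.

Definition occurrences (V W : word) : nat :=
  count (fun i => take (size V) (drop i W) == V) (iota 0 (size W - size V).+1).

Definition wpow (Y : word) (s : nat) : word := flatten (nseq s Y).

Definition aperiodic (s : nat) (W : word) : Prop :=
  forall Y : word, Y <> [::] -> ~~ subword (wpow Y s) W.

Fixpoint all_words (n : nat) : seq word :=
  match n with
  | 0 => [:: [::]]
  | n'.+1 => [seq b :: w | b <- [:: true; false], w <- all_words n']
  end.
Definition words_upto (i : nat) : seq word :=
  flatten [seq all_words n | n <- iota 0 i.+1].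

Definition card_upto (S : pred word) (i : nat) : nat := count S (words_upto i).

Definition exponential (S : pred word) : Prop :=
  exists (C : nat) (c : R), (1 < c)%R /\
    forall i : nat, (C <= i)%N -> (c ^ i <= INR (card_upto S i))%R.

(* Main.v *)
Require Import Defs.
From mathcomp Require Import all_boot.
From Stdlib Require Import Reals.
From mathcomp Require Import ssreflect ssrfun ssrbool eqtype ssrnat seq div prime.
From mathcomp Require Import zify.
From Stdlib Require Import Lia Lra.
Set Implicit Arguments. Unset Strict Implicit. Unset Printing Implicit Defensive.

Definition chunk (f d h e : bool) : seq bool :=
  [:: true; true; true; true; false;
      f; ~~ f; false; d; ~~ d; false; h; ~~ h; false; e; ~~ e; false;
      false; true; false].

Definition M5 : seq bool := [:: true; true; true; true; false].

Lemma size_chunk f d h e : size (chunk f d h e) = 20.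
Proof. by []. Qed.

Definition chk_marker (w : seq bool) : bool :=
  all (fun r => take 5 (drop r w) != M5) (iota 1 19).
Definition chk_pow (w : seq bool) : bool :=
  all (fun r => all (fun p => ~~ all (fun t => nth false w (r+t) == nth false w (r+t+p)) (iota 0 (6*p))) [:: 1; 2; 3]) (iota 0 20).

Lemma chk_all f d h e f' d' h' e' :
  chk_marker (chunk f d h e ++ chunk f' d' h' e') && chk_pow (chunk f d h e ++ chunk f' d' h' e').
Proof. by case: f; case: d; case: h; case: e; case: f'; case: d'; case: h'; case: e'; vm_compute. Qed.

Lemma nth_flatten_const (T : Type) (x0 : T) (l : seq (seq T)) (L i r : nat) :
  all (fun c => size c == L) l -> r < L -> i < size l ->
  nth x0 (flatten l) (i * L + r) = nth x0 (nth [::] l i) r.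
Proof.
elim: l i => [|c l IH] [|i] //= /andP[/eqP Hc Hl] Hr Hi.
  by rewrite nth_cat Hc Hr.
rewrite nth_cat Hc mulSn -addnA ltnNge leq_addr /= addKn IH //.
Qed.

Lemma size_flatten_const (T : Type) (l : seq (seq T)) (L : nat) :
  all (fun c => size c == L) l -> size (flatten l) = size l * L.
Proof. by elim: l => [|c l IH] //= /andP[/eqP Hc /IH]; rewrite size_cat Hc => ->. Qed.

Lemma nth_wpow (Y : word) k t : t < k * size Y ->
  nth false (wpow Y k) t = nth false Y (t %% size Y).
Proof.
elim: k t => [|k IH] t; first by rewrite mul0n.
rewrite /wpow /= nth_cat mulSn => Ht.
case: (ltnP t (size Y)) => Hl; first by rewrite modn_small.
rewrite -/(wpow Y k) IH ?ltn_subLR //.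
by rewrite -{2}(subnK Hl) modnDr.
Qed.

Lemma size_wpow (Y : word) k : size (wpow Y k) = k * size Y.
Proof. by elim: k => //= k IH; rewrite size_cat IH mulSn. Qed.

Definition frame (i : nat) : bool := odd (logn 2 i.+1).
Definition G (n : nat) (x : word) (i : nat) : seq bool :=
  chunk (frame i) (nth false x (i %% n)) (i %% n < i %/ n) (i %% n == 0).
Definition Wf (m n : nat) (x : word) : word := flatten [seq G n x i | i <- iota 0 (m * n)].

Lemma all_sizeG n x l : all (fun c => size c == 20) [seq G n x i | i <- l].
Proof. by apply/allP => c /mapP[i _ ->]. Qed.

Lemma size_Wf m n x : size (Wf m n x) = m * n * 20.
Proof. by rewrite /Wf (size_flatten_const (all_sizeG _ _ _)) size_map size_iota. Qed.

Lemma nth_Wf m n x i r : i < m * n -> r < 20 ->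
  nth false (Wf m n x) (i * 20 + r) = nth false (G n x i) r.
Proof.
move=> Hi Hr; rewrite /Wf nth_flatten_const ?all_sizeG ?size_map ?size_iota //.
by rewrite (nth_map 0) ?size_iota // nth_iota.
Qed.

Lemma nth_Wf2 m n x i r : i * 20 + r < size (Wf m n x) -> r < 40 ->
  nth false (Wf m n x) (i * 20 + r) = nth false (G n x i ++ G n x i.+1) r.
Proof.
rewrite size_Wf => Hs Hr; rewrite nth_cat /G size_chunk -/(G n x i) -/(G n x i.+1).
case: ltnP => Hr2.
  rewrite nth_Wf // -(ltn_pmul2r (isT : 0 < 20)).
  exact: leq_ltn_trans (leq_addr r _) Hs.
have E : i * 20 + r = i.+1 * 20 + (r - 20) by rewrite mulSn; lia.
rewrite E nth_Wf //; last by rewrite ltn_subLR.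
move: Hs Hr2; set N := m * n; lia.
Qed.

Lemma chk_G n x i : chk_marker (G n x i ++ G n x i.+1) && chk_pow (G n x i ++ G n x i.+1).
Proof. exact: chk_all. Qed.

Lemma sync m n x q : q + 5 <= size (Wf m n x) ->
  (forall r, r < 5 -> nth false (Wf m n x) (q + r) = nth false M5 r) -> q %% 20 = 0.
Proof.
move=> Hs HM.
have Hq := divn_eq q 20.
set i := q %/ 20 in Hq; set rho := q %% 20 in Hq *.
have Hrho : rho < 20 by rewrite ltn_mod.
case: (posnP rho) => // Hp.
have Hw : take 5 (drop rho (G n x i ++ G n x i.+1)) = M5.
  apply: (@eq_from_nth _ false).
    by rewrite size_take size_drop size_cat /G !size_chunk; case: ifP => //; lia.
  move=> j; rewrite size_take size_drop size_cat /G !size_chunk -/(G n x i) -/(G n x i.+1).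
  move=> Hj.
  have Hj5 : j < 5 by move: Hj; case: ifP => //; lia.
  rewrite nth_take // nth_drop -(@nth_Wf2 m n x); last by lia.
    by rewrite addnA -Hq HM.
  by rewrite addnA -Hq; lia.
have := chk_G n x i; case/andP => /allP /(_ rho) H _.
by move: H; rewrite mem_iota Hw eqxx; lia.
Qed.

Lemma no_small_pow m n x s p : 0 < p < 4 -> s + 7 * p <= size (Wf m n x) ->
  ~ (forall t, t < 6 * p -> nth false (Wf m n x) (s + t) = nth false (Wf m n x) (s + t + p)).
Proof.
move=> Hp Hs Hper.
have Hq := divn_eq s 20.
set i := s %/ 20 in Hq; set rho := s %% 20 in Hq *.
have Hrho : rho < 20 by rewrite ltn_mod.
have := chk_G n x i; case/andP => _ /allP /(_ rho).
rewrite mem_iota Hrho => /(_ isT) /allP /(_ p).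
have -> : p \in [:: 1; 2; 3] by rewrite !inE; lia.
move=> /(_ isT) /allP; apply=> t; rewrite mem_iota add0n => Ht.
rewrite -!(@nth_Wf2 m n x) -?addnA -?Hq; try lia.
rewrite !addnA -Hq; apply/eqP; apply: Hper; lia.
Qed.

Lemma logn2_odd c e : odd c -> logn 2 (c * 2 ^ e) = e.
Proof. by move=> Hc; rewrite logn_Gauss ?coprime2n // pfactorK. Qed.

Lemma frame_nonper a k : 0 < k -> exists t, t < 4 * k /\ frame (a + t) != frame (a + t + k).
Proof.
move=> Hk.
have [o Ho Hko] := pfactor_coprime (isT : prime 2) Hk.
rewrite coprime2n in Ho.
set e := logn 2 k in Hko.
have Hq : 2 ^ e <= k by rewrite Hko leq_pmull //; case: o Ho Hko.
set q := 2 ^ e in Hko Hq.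
have Ha := divn_eq a.+1 (4 * q).
set B := a.+1 %/ (4 * q) in Ha.
set r := a.+1 %% (4 * q) in Ha.
have Hr : r < 4 * q by rewrite ltn_mod muln_gt0 expn_gt0.
have key : forall c, odd c -> a.+1 <= c * (2 * q) -> c * (2 * q) < a.+1 + 4 * k ->
    exists t, t < 4 * k /\ frame (a + t) != frame (a + t + k).
  move=> c Hc H1 H2; exists (c * (2 * q) - a.+1); split; first by lia.
  rewrite /frame.
  have -> : (a + (c * (2 * q) - a.+1)).+1 = c * (2 * q) by lia.
  have -> : (a + (c * (2 * q) - a.+1) + k).+1 = k + c * (2 * q) by lia.
  have -> : c * (2 * q) = c * 2 ^ e.+1 by rewrite expnS (mulnC 2).
  have -> : k + c * 2 ^ e.+1 = (o + 2 * c) * 2 ^ e.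
    by rewrite Hko expnS mulnDl; congr (_ + _); rewrite -/q mulnA (mulnC c).
  rewrite !logn2_odd //=; first by case: (odd e).
  by rewrite oddD oddM Ho.
set X := B * (4 * q) in Ha.
have HX : X = (2 * B) * (2 * q) by rewrite /X; nia.
case: (leqP r (2 * q)) => Hrq.
  apply: (key (2 * B + 1)); first by rewrite oddD oddM.
    by rewrite mulnDl -HX mul1n; lia.
  by rewrite mulnDl -HX mul1n; lia.
apply: (key (2 * B + 3)); first by rewrite oddD oddM.
  by rewrite mulnDl -HX; lia.
by rewrite mulnDl -HX; lia.
Qed.

Lemma infix_pos (V W : word) : infix V W -> exists s, s + size V <= size W /\
  forall t, t < size V -> nth false W (s + t) = nth false V t.
Proof.
case/infixP => [u [u' ->]]; exists (size u); split.
  by rewrite !size_cat addnA leq_addr.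
by move=> t Ht; rewrite nth_cat ltnNge leq_addr /= addKn nth_cat Ht.
Qed.

Lemma nth_G5 n x i : nth false (G n x i) 5 = frame i.
Proof. by []. Qed.

Lemma nth_GM n x i r : r < 5 -> nth false (G n x i) r = nth false M5 r.
Proof. by case: r => [|[|[|[|[|]]]]]. Qed.

Lemma aper m n x : aperiodic 7 (Wf m n x).
Proof.
move=> Y HY; apply/negP => /infix_pos [s [Hs Hnth]].
set W := Wf m n x in Hs Hnth.
set p := size Y in Hs Hnth.
have Hp : 0 < p by rewrite /p lt0n size_eq0; apply/eqP.
rewrite size_wpow in Hs Hnth.
have Hper : forall t, t < 6 * p -> nth false W (s + t) = nth false W (s + t + p).
  move=> t Ht; rewrite -addnA !Hnth ?nth_wpow ?size_wpow -/p; try lia.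
  by rewrite modnDr.
have HsW : size W = m * n * 20 by rewrite /W size_Wf.
case: (ltnP p 4) => Hp4.
  by apply: (@no_small_pow m n x s p) => //; apply/andP.
have Ha := divn_eq (s + 19) 20.
set a := (s + 19) %/ 20 in Ha.
have Hr := ltn_mod (s + 19) 20.
set rho := (s + 19) %% 20 in Ha Hr.
have Hmark : forall r, r < 5 -> nth false W (a * 20 + p + r) = nth false M5 r.
  move=> r Hr5.
  have -> : a * 20 + p + r = s + (a * 20 + r - s) + p by lia.
  rewrite -Hper; last by lia.
  have -> : s + (a * 20 + r - s) = a * 20 + r by lia.
  rewrite /W nth_Wf ?nth_GM //; lia.
have := @sync m n x (a * 20 + p); rewrite -/W => Hsy.
have Hp20 : p %% 20 = 0.
  rewrite -(modnMDl a) Hsy //; lia.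
have Hpk := divn_eq p 20; rewrite Hp20 addn0 in Hpk.
set k := p %/ 20 in Hpk.
have Hk : 0 < k by lia.
have [t [Ht Hf]] := frame_nonper a Hk.
move/negP: Hf; apply.
have E1 : (a + t) * 20 + 5 = s + ((a + t) * 20 + 5 - s) by lia.
have E2 : (a + t + k) * 20 + 5 = s + ((a + t) * 20 + 5 - s) + p by lia.
have Hlt : (a + t) * 20 + 5 - s < 6 * p by lia.
have := Hper _ Hlt; rewrite -E2 -E1 /W !nth_Wf //; try lia.
by rewrite !nth_G5 => ->.
Qed.

Lemma Gd n x i : nth false (G n x i) 8 = nth false x (i %% n). Proof. by []. Qed.
Lemma Gh n x i : nth false (G n x i) 11 = (i %% n < i %/ n). Proof. by []. Qed.
Lemma Ge n x i : nth false (G n x i) 14 = (i %% n == 0). Proof. by []. Qed.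

Lemma mod_up a n : 0 < n -> (a + (n - a %% n) %% n) %% n = 0.
Proof.
move=> Hn; rewrite modnDmr.
have -> : a + (n - a %% n) = (a %/ n).+1 * n.
  rewrite mulSn {1}(divn_eq a n); have := ltn_mod a n; rewrite Hn; lia.
by rewrite modnMl.
Qed.

Lemma core m n x n' x' s s' l :
  0 < m -> m <= n -> m <= n' -> size x = n -> size x' = n' ->
  s + l <= size (Wf m n x) -> s' + l <= size (Wf m n' x') -> (2 * n + 1) * 20 <= l ->
  (forall t, t < l -> nth false (Wf m n x) (s + t) = nth false (Wf m n' x') (s' + t)) ->
  [/\ n = n', x = x' & s = s'].
Proof.
move=> Hm Hmn Hmn' Hx Hx' Hs Hs' Hl Heq.
have Hn : 0 < n by lia.
have Hn' : 0 < n' by lia.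
rewrite size_Wf in Hs; rewrite size_Wf in Hs'.
have Ha := divn_eq (s + 19) 20.
set a := (s + 19) %/ 20 in Ha.
have Hr := ltn_mod (s + 19) 20.
set rho := (s + 19) %% 20 in Ha Hr.
have Hsy := @sync m n' x' (s' + (a * 20 - s)).
have Hq : (s' + (a * 20 - s)) %% 20 = 0.
  apply: Hsy; first by rewrite size_Wf; lia.
  move=> r Hr5.
  have -> : s' + (a * 20 - s) + r = s' + (a * 20 + r - s) by lia.
  rewrite -Heq; last by lia.
  have -> : s + (a * 20 + r - s) = a * 20 + r by lia.
  rewrite nth_Wf ?nth_GM //; lia.
have Ha' := divn_eq (s' + (a * 20 - s)) 20; rewrite Hq addn0 in Ha'.
set a' := (s' + (a * 20 - s)) %/ 20 in Ha'.
have tr : forall t r, r < 20 -> (a + t) * 20 + 20 <= s + l ->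
    nth false (G n x (a + t)) r = nth false (G n' x' (a' + t)) r.
  move=> t r Hr20 Htl.
  rewrite -(@nth_Wf m n x); [|lia|lia].
  rewrite -(@nth_Wf m n' x'); [|lia|lia].
  have -> : (a + t) * 20 + r = s + ((a + t) * 20 + r - s) by lia.
  have -> : (a' + t) * 20 + r = s' + ((a + t) * 20 + r - s) by lia.
  apply: Heq; lia.
set t1 := (n - a %% n) %% n.
have Ht1 : t1 < n by rewrite ltn_mod.
have Hb := mod_up a Hn; rewrite -/t1 in Hb.
have Hrange : forall t, t <= t1 + n -> (a + t) * 20 + 20 <= s + l by move=> t Ht; lia.
have eb : forall t, t <= t1 + n -> ((a + t) %% n == 0) = ((a' + t) %% n' == 0).
  by move=> t Ht; rewrite -(Ge n x) -(Ge n' x') tr //; apply: Hrange.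
have Hb' : (a' + t1) %% n' = 0 by apply/eqP; rewrite -eb ?Hb ?leq_addr.
have Hbn' : (a' + t1 + n) %% n' = 0.
  apply/eqP; rewrite -addnA -eb ?leq_addr // addnA -modnDml Hb add0n modnn //.
have Hdv : n' %| n by rewrite /dvdn -(modnDml (a' + t1)) Hb' add0n in Hbn'; apply/eqP.
have Enn : n' = n.
  apply/eqP; rewrite eqn_leq dvdn_leq //= leqNgt; apply/negP => Hlt.
  have H : t1 + n' <= t1 + n by rewrite leq_add2l; apply: ltnW.
  move: (eb _ H); rewrite !addnA -modnDml Hb add0n modn_small //.
  rewrite -(modnDml (a' + t1)) Hb' add0n modnn eqxx.
  by move/eqP => E; rewrite E in Hn'.
rewrite Enn in Hx' Hb' tr Hs' Heq Hmn' Hn' *.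
have Hbr : forall r, r < n -> (a + t1 + r) %% n = r /\ (a' + t1 + r) %% n = r.
  by move=> r Hrn; rewrite -(modnDml (a + t1)) -(modnDml (a' + t1)) Hb Hb' !add0n modn_small.
have Hxx : x = x'.
  apply: (@eq_from_nth _ false); first by rewrite Hx Hx'.
  move=> r; rewrite Hx => Hrn; have [H1 H2] := Hbr r Hrn.
  have Hle : t1 + r <= t1 + n by rewrite leq_add2l; apply: ltnW.
  by have := tr (t1 + r) 8 isT (Hrange _ Hle); rewrite !Gd !addnA H1 H2 => ->.
subst x'.
have Hdiv : forall b r, b %% n = 0 -> r < n -> (b + r) %/ n = b %/ n.
  move=> b r Hb0 Hrn; rewrite divnDl ?(divn_small Hrn) ?addn0 //.
  by apply/eqP.
have hb : forall r, r < n -> (r < (a + t1) %/ n) = (r < (a' + t1) %/ n).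
  move=> r Hrn; have [H1 H2] := Hbr r Hrn.
  have Hle : t1 + r <= t1 + n by rewrite leq_add2l; apply: ltnW.
  by have := tr (t1 + r) 11 isT (Hrange _ Hle); rewrite !Gh !addnA H1 H2 (Hdiv _ _ Hb Hrn) (Hdiv _ _ Hb' Hrn) => ->.
have jb : (a + t1) %/ n < m.
  rewrite ltn_divLR //; have := Hrange t1 (leq_addr _ _); clear - Hs; lia.
have jb' : (a' + t1) %/ n < m.
  rewrite ltn_divLR //.
  have := Hrange t1 (leq_addr _ _); clear - Hs Ha Ha' Hs'; lia.
have Ej : (a + t1) %/ n = (a' + t1) %/ n.
  apply/eqP; rewrite eqn_leq; apply/andP; split; rewrite leqNgt; apply/negP => Hlt.
    by have := hb _ (leq_trans jb' Hmn); rewrite Hlt ltnn.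
  by have := hb _ (leq_trans jb Hmn); rewrite Hlt ltnn.
have Eb : a + t1 = a' + t1.
  have E1 : a + t1 = (a + t1) %/ n * n by rewrite {1}(divn_eq (a + t1) n) Hb addn0.
  have E2 : a' + t1 = (a' + t1) %/ n * n by rewrite {1}(divn_eq (a' + t1) n) Hb' addn0.
  by rewrite E1 E2 Ej.
have Eaa : a = a' by apply: (@addIn t1).
split => //; clear - Eaa Ha Ha' Hr; lia.
Qed.

Lemma all_wordsS n : all_words n.+1 = [seq b :: w | b <- [:: true; false], w <- all_words n].
Proof. by []. Qed.

Lemma all_words_size n w : w \in all_words n -> size w = n.
Proof.
elim: n w => [|n IH] w; first by rewrite inE => /eqP ->.
by rewrite all_wordsS => /allpairsP [[b w'] [_ Hw' ->]] /=; rewrite IH.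
Qed.

Lemma all_words_mem n w : size w = n -> w \in all_words n.
Proof.
elim: n w => [|n IH] [|b w] // [Hw].
by rewrite all_wordsS; apply/allpairsP; exists (b, w); split => //; [case: b | apply: IH].
Qed.

Lemma all_words_uniq n : uniq (all_words n).
Proof.
elim: n => [|n IH] //; rewrite all_wordsS.
by apply: allpairs_uniq => // [[b w] [b' w']] _ _ /= [-> ->].
Qed.

Lemma all_words_card n : size (all_words n) = 2 ^ n.
Proof. by elim: n => [|n IH] //; rewrite all_wordsS size_allpairs IH expnS. Qed.

Lemma count_flatten_mem (S : pred word) (ss : seq (seq word)) l :
  l \in ss -> count S l <= count S (flatten ss).
Proof.
elim: ss => [|y ss IH] //=; rewrite inE count_cat => /orP[/eqP -> | H].
  exact: leq_addr.
by apply: leq_trans (IH H) _; rewrite leq_addl.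
Qed.

Lemma count_upto (S : pred word) N i : N <= i -> count S (all_words N) <= card_upto S i.
Proof.
move=> HN; apply: count_flatten_mem; apply/mapP; exists N => //.
by rewrite mem_iota /= add0n ltnS.
Qed.

Definition dec n (W : word) : word := [seq nth false W (i * 20 + 8) | i <- iota 0 n].

Lemma dec_Wf m n x : 0 < m -> size x = n -> dec n (Wf m n x) = x.
Proof.
move=> Hm Hx; rewrite /dec; apply: (@eq_from_nth _ false); first by rewrite size_map size_iota.
rewrite size_map size_iota => i Hi.
rewrite (nth_map 0) ?size_iota // nth_iota // add0n nth_Wf //; last first.
  by apply: leq_trans Hi _; rewrite leq_pmull.
by rewrite Gd modn_small // Hx.
Qed.

Definition Sm (m : nat) : pred word := fun W =>
  let n := size W %/ (m * 20) in (m <= n) && (W == Wf m n (dec n W)).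

Lemma Sm_spec m W : Sm m W -> exists n x, [/\ m <= n, size x = n & W = Wf m n x].
Proof.
rewrite /Sm => /andP[H1 /eqP H2].
by exists (size W %/ (m * 20)), (dec (size W %/ (m * 20)) W); split; rewrite /dec ?size_map ?size_iota.
Qed.

Lemma Sm_Wf m n x : 0 < m -> m <= n -> size x = n -> Sm m (Wf m n x).
Proof.
move=> Hm Hmn Hx; rewrite /Sm size_Wf.
have -> : m * n * 20 %/ (m * 20) = n.
  by rewrite mulnAC mulnC mulnK // muln_gt0 Hm.
by rewrite Hmn dec_Wf // eqxx.
Qed.

Lemma count_Sm m n : 0 < m -> m <= n -> 2 ^ n <= count (Sm m) (all_words (m * n * 20)).
Proof.
move=> Hm Hmn.
rewrite -all_words_card -(size_map (Wf m n)) -size_filter.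
apply: uniq_leq_size.
  rewrite map_inj_in_uniq ?all_words_uniq // => x y Hx Hy E.
  by rewrite -(dec_Wf Hm (all_words_size Hx)) E dec_Wf // (all_words_size Hy).
move=> w /mapP[x Hx ->]; rewrite mem_filter Sm_Wf ?(all_words_size Hx) //=.
by rewrite all_words_mem // size_Wf.
Qed.

Lemma INR_expn2 n : INR (2 ^ n) = (2 ^ n)%R.
Proof.
elim: n => [|n IH] //; rewrite expnS mult_INR IH.
change (2 ^ n.+1)%R with (2 * 2 ^ n)%R; congr (_ * _)%R; simpl; ring.
Qed.

Lemma leINR a b : a <= b -> (INR a <= INR b)%R.
Proof. by move/leP; apply: le_INR. Qed.

Lemma exp_part m : 0 < m -> exponential (Sm m).
Proof.
move=> Hm.
have HM : (0 < INR (m * 40))%R by apply: lt_0_INR; apply/ltP; rewrite muln_gt0 Hm.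
exists (m * 20 * m.+1), (Rpower 2 (/ INR (m * 40))); split.
  rewrite -{1}(Rpower_O 2); last by lra.
  apply: Rpower_lt; first by lra.
  by apply: Rinv_0_lt_compat.
move=> i Hi.
have H20 : 0 < m * 20 by rewrite muln_gt0 Hm.
have Hd := divn_eq i (m * 20).
have Hr := ltn_mod i (m * 20); rewrite H20 in Hr.
set n := i %/ (m * 20) in Hd.
set r := i %% (m * 20) in Hd Hr.
have Hn : m < n.
  rewrite /n leq_divRL //; rewrite mulnC; exact: Hi.
have Hc := count_Sm Hm (ltnW Hn).
have Hu := @count_upto (Sm m) (m * n * 20) i.
have Hle : 2 ^ n <= card_upto (Sm m) i.
  apply: leq_trans Hc (Hu _); rewrite Hd (mulnC m) -mulnA; exact: leq_addr.
apply: Rle_trans (leINR Hle); rewrite INR_expn2.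
have Hc0 : (0 < Rpower 2 (/ INR (m * 40)))%R by apply: exp_pos.
rewrite -Rpower_pow // Rpower_mult -Rpower_pow; last by lra.
apply: Rle_Rpower; first by lra.
have Hin : i <= n * (m * 40).
  have Hnm : m * 20 <= n * (m * 20) by rewrite leq_pmull //; lia.
  rewrite Hd; move: Hnm Hr; set K := m * 20.
  have -> : m * 40 = 2 * K by rewrite /K; lia.
  lia.
apply: (Rmult_le_reg_l (INR (m * 40))) => //.
rewrite -Rmult_assoc Rinv_r; last by lra.
rewrite Rmult_1_l Rmult_comm -mult_INR; exact: leINR.
Qed.

Lemma INR_muln a b : INR (a * b) = (INR a * INR b)%R.
Proof. exact: mult_INR. Qed.

Lemma take_drop_nth (W V : word) i : take (size V) (drop i W) = V ->
  forall t, t < size V -> nth false W (i + t) = nth false V t.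
Proof.
by move=> H t Ht; rewrite -H nth_take ?size_take // nth_drop.
Qed.

Lemma nth_take_drop (W V : word) i : i + size V <= size W ->
  (forall t, t < size V -> nth false W (i + t) = nth false V t) ->
  take (size V) (drop i W) = V.
Proof.
move=> Hs Hn; apply: (@eq_from_nth _ false).
  rewrite size_take size_drop; case: ifP => ? //; lia.
move=> t; rewrite size_take size_drop => Ht.
have Ht' : t < size V by move: Ht; case: ifP => ?; lia.
by rewrite nth_take // nth_drop Hn.
Qed.

Theorem lemma1 (lam : R) (hlam : (0 < lam)%R) :
  exists S : pred word,
    exponential S /\
    (forall W V : word, S W -> subword V W ->
       (lam * INR (size W) <= INR (size V))%R ->
       occurrences V W = 1%N /\
       (forall U : word, S U -> subword V U -> U = W)) /\
    (forall W : word, S W -> aperiodic 7 W).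
Proof.
have [m0 Hm0] := INR_unbounded (4 / lam).
set m := m0.+1.
have Hm : 0 < m by [].
have Hlm : (4 <= lam * INR m)%R.
  have H1 : (INR m0 <= INR m)%R by apply: leINR.
  have H2 : (4 / lam < INR m)%R by lra.
  have E : (lam * (4 / lam) = 4)%R by field; lra.
  have := Rmult_lt_compat_l lam _ _ hlam H2; lra.
exists (Sm m); split; first exact: exp_part.
split; last first.
  by move=> W /Sm_spec [n [x [_ _ ->]]]; apply: aper.
move=> W V /Sm_spec [n [x [Hmn Hx EW]]] HVW Hlam.
have HnV : (2 * n + 1) * 20 <= size V.
  have : (INR (4 * (n * 20)) <= INR (size V))%R.
    apply: Rle_trans Hlam.
    rewrite EW size_Wf -mulnA INR_muln (INR_muln m) -Rmult_assoc.
    apply: Rmult_le_compat_r; first exact: pos_INR.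
    by rewrite (_ : INR 4 = 4%R) //; simpl; lra.
  move/INR_le/leP; lia.
have [s [Hs Hns]] := infix_pos HVW.
have Hocc : forall i, i + size V <= size W ->
    (take (size V) (drop i W) == V) = (i == s).
  move=> i Hi; apply/eqP/eqP => [/take_drop_nth H2 | ->].
    have Hs1 : i + size V <= size (Wf m n x) by rewrite -EW.
    have Hs2 : s + size V <= size (Wf m n x) by rewrite -EW.
    have Heq : forall t, t < size V -> nth false (Wf m n x) (i + t) = nth false (Wf m n x) (s + t).
      by move=> t Ht; rewrite -EW H2 // Hns.
    by have [] := core Hm Hmn Hmn Hx Hx Hs1 Hs2 HnV Heq.
  exact: nth_take_drop.
split.
  rewrite /occurrences (@eq_in_count _ _ (pred1 s)).
    rewrite count_uniq_mem ?iota_uniq // mem_iota add0n.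
    by have -> : s < (size W - size V).+1 by lia.
  move=> i; rewrite mem_iota add0n => Hi /=; apply: Hocc; lia.
move=> U /Sm_spec [n' [x' [Hmn' Hx' EU]]] HVU.
have [s' [Hs' Hns']] := infix_pos HVU.
have Hs1 : s + size V <= size (Wf m n x) by rewrite -EW.
have Hs2 : s' + size V <= size (Wf m n' x') by rewrite -EU.
have Heq : forall t, t < size V -> nth false (Wf m n x) (s + t) = nth false (Wf m n' x') (s' + t).
  by move=> t Ht; rewrite -EW -EU Hns // Hns'.
have [E1 E2 _] := core Hm Hmn Hmn' Hx Hx' Hs1 Hs2 HnV Heq.
by rewrite EU EW E1 E2.
Qed.
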